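(* Let $D$ be a positive integer that is not a perfect square, and let $Q_1,Q_2,Q_3$ be forms in the principal cycle of determinant $D$. Suppose $\tilde I\approx Q_1$ via $S_1=\pm L_{k_1}$ and $\tilde I\approx Q_2$ via $S_2=\pm L_{k_2}$, where $k_1,k_2\ge0$. Suppose $Q_3=Q_1\circ Q_2$ via a bilinear matrix $B$ with $\log\|B\|\le c_1\log D$ for a constant $c_1$. Let $S_3$ be defined by $S_3B=B_0(S_1\otimes S_2)$, where $B_0=\begin{pmatrix}1&0&0&D-\lambda^2\\0&1&1&2\lambda\end{pmatrix}$, $\lambda=\lfloor\sqrt D\rfloor$, and suppose $S_3=\pm L_{k_3}$. Define $\xi$ by $$\log\|L_{k_3}\|=\log\|L_{k_1}\|+\log\|L_{k_2}\|+\xi.$$ Then $|\xi|\le (c_1+4)\log D$.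
   Context: Forms $[a,2b,c]$ mean $ax_1^2+2bx_1x_2+cx_2^2$ with matrix $\begin{pmatrix} a&b\\ b&c\end{pmatrix}$, determinant $b^2-ac$. $Q\approx Q'$ via $S$: $S$ integer $2\times2$, $\det S=1$, $S^tQS=Q'$. Reduced form of determinant $D$: $0<b<\sqrt D$, $\sqrt D-b<|a|<\sqrt D+b$. $\tilde I=[1,2\lambda,\lambda^2-D]$. The right neighbor of a reduced $Q_1=[a_1,2b_1,c_1]$ is $S^tQ_1S$ with $S=\begin{pmatrix}0&1\\-1&\mu\end{pmatrix}$, $\mu$ the integer with $-\sqrt D-b_1<\mu c_1<-\sqrt D-b_1+|c_1|$. Principal cycle: $Q^{(0)}=\tilde I$, $Q^{(j)}$ the right neighbor of $Q^{(j-1)}$, $S^{(j)}$ the corresponding matrix; $L_0=$ identity, $L_j=S^{(1)}\cdots S^{(j)}$ for $j\ge1$; the cycle has least period $2p$; for negative $j$, $S^{(j)}=(S^{(j_0)})^{-1}$ with $j\equiv j_0\pmod{2p}$, $0<j_0\le2p$, and $L_{-j}=S^{(-j)}\cdots S^{(-1)}$. Composition $Q_3=Q_1\circ Q_2$ via a $2\times4$ integer matrix $B$: $(x^tQ_1x)(y^tQ_2y)=z^tB^tQ_3Bz$ identically with $z=(x_1y_1,x_1y_2,x_2y_1,x_2y_2)^t$, where $B$ is unimodular (its six $2\times2$ minors $\Delta_{ik}$ from columns $i<k$ have gcd 1) and oriented ($a_1\Delta_{12}>0$, $a_2\Delta_{13}>0$, $a_i$ the leading coefficient of $Q_i$). $\otimes$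 is the Kronecker product. $\|M\|$ is the maximum absolute value of the entries of $M$. Logarithms: $\log x=\log_2|x|$ if $|x|\ge4$, and $\log x=2$ if $|x|<4$. *)

(* Defs.v *)
From HB Require Import structures.
From Stdlib Require Import ClassicalEpsilon.
From mathcomp Require Import all_boot all_order all_algebra.
From mathcomp Require Import reals Rstruct exp.
Set Implicit Arguments. Unset Strict Implicit. Unset Printing Implicit Defensive.
Import Order.TTheory GRing.Theory Num.Theory.
Local Open Scope ring_scope.

Notation R := Rdefinitions.R.

(* A bqform [a,2b,c] is stored as the triple (a,b,c). *)
Definition bqform := (int * int * int)%type.
Definition fa (q : bqform) : int := q.1.1.
Definition fb (q : bqform) : int := q.1.2.
Definition fc (q : bqform) : int := q.2.

Definition fmat (q : bqform) : 'M[int]_2 :=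
  \matrix_(i < 2, j < 2)
    (if (i == 0 :> nat) && (j == 0 :> nat) then fa q
     else if (i == 1 :> nat) && (j == 1 :> nat) then fc q else fb q).

Definition form_of_mat (M : 'M[int]_2) : bqform := (M 0 0, M 0 1, M 1 1).

Definition fdet (q : bqform) : int := fb q ^+ 2 - fa q * fc q.

Definition equiv_via (Q Q' : bqform) (S : 'M[int]_2) : Prop :=
  \det S = 1 /\ S^T *m fmat Q *m S = fmat Q'.

Definition toR (z : int) : R := z%:~R.
Definition sqrtD (D : int) : R := Num.sqrt (toR D).
Definition lam (D : int) : int := Num.floor (sqrtD D).

Definition Itilde (D : int) : bqform := (1, lam D, lam D ^+ 2 - D).

Definition reduced (D : int) (q : bqform) : Prop :=
  0 < toR (fb q) < sqrtD D /\
  sqrtD D - toR (fb q) < toR `|fa q| < sqrtD D + toR (fb q).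

Definition mu_spec (D : int) (q : bqform) (mu : int) : Prop :=
  - sqrtD D - toR (fb q) < toR (mu * fc q) /\
  toR (mu * fc q) < - sqrtD D - toR (fb q) + toR `|fc q|.

Definition mu_of (D : int) (q : bqform) : int :=
  epsilon (inhabits 0) (mu_spec D q).

Definition nbr_mat (mu : int) : 'M[int]_2 :=
  \matrix_(i < 2, j < 2)
    (if (i == 0 :> nat) then (if (j == 0 :> nat) then 0 else 1)
     else (if (j == 0 :> nat) then -1 else mu)).

Definition nbrS (D : int) (q : bqform) : 'M[int]_2 := nbr_mat (mu_of D q).

Definition right_nbr (D : int) (q : bqform) : bqform :=
  form_of_mat ((nbrS D q)^T *m fmat q *m nbrS D q).

Fixpoint cycQ (D : int) (n : nat) : bqform :=
  match n with 0 => Itilde D | n'.+1 => right_nbr D (cycQ D n') end.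

(* S^(j) for j >= 1 (value at 0 is unused) *)
Definition cycS_nat (D : int) (n : nat) : 'M[int]_2 :=
  match n with 0 => 1%:M | n'.+1 => nbrS D (cycQ D n') end.

Definition least_period (D : int) (P : nat) : Prop :=
  (0 < P)%N /\ (forall j, cycQ D (j + P) = cycQ D j) /\
  (forall m, (0 < m)%N -> (forall j, cycQ D (j + m) = cycQ D j) -> (P <= m)%N).

Definition cyc_period (D : int) : nat := epsilon (inhabits 0%N) (least_period D).

(* S^(j) for all integers j (j = 0 unused) *)
Definition cycS (D : int) (j : int) : 'M[int]_2 :=
  match j with
  | Posz n => cycS_nat D n
  | Negz _ =>
      let P := cyc_period D in
      let r := (j %% (P%:Z))%Z in
      let j0 := if r == 0 then P else `|r|%N in
      invmx (cycS_nat D j0)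
  end.

(* L_k : L_0 = 1, L_k = S^(1)...S^(k), L_{-j} = S^(-j)...S^(-1) *)
Definition Lmat (D : int) (k : int) : 'M[int]_2 :=
  match k with
  | Posz n => \prod_(i < n) cycS D (i.+1)%:Z
  | Negz m => \prod_(i < m.+1) cycS D (i%:Z - (m.+1)%:Z)
  end.

Definition in_cycle (D : int) (q : bqform) : Prop := exists j : nat, q = cycQ D j.

Definition qval (q : bqform) (w : 'cV[int]_2) : int := (w^T *m fmat q *m w) 0 0.

(* z = (x1 y1, x1 y2, x2 y1, x2 y2)^t *)
Definition zvec (x y : 'cV[int]_2) : 'cV[int]_4 :=
  \col_(i < 4) (x (inord (i %/ 2)) 0 * y (inord (i %% 2)) 0).

Definition kron2 (A C : 'M[int]_2) : 'M[int]_4 :=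
  \matrix_(i < 4, j < 4)
    (A (inord (i %/ 2)) (inord (j %/ 2)) * C (inord (i %% 2)) (inord (j %% 2))).

Definition minor2 (B : 'M[int]_(2, 4)) (i k : 'I_4) : int :=
  B 0 i * B 1 k - B 0 k * B 1 i.

Definition unimodular24 (B : 'M[int]_(2, 4)) : Prop :=
  \big[gcdz/0]_(i < 4) \big[gcdz/0]_(k < 4 | (i < k)%N) minor2 B i k = 1.

Definition oriented (Q1 Q2 : bqform) (B : 'M[int]_(2, 4)) : Prop :=
  0 < fa Q1 * minor2 B 0 1 /\ 0 < fa Q2 * minor2 B 0 2.

Definition composes (Q1 Q2 Q3 : bqform) (B : 'M[int]_(2, 4)) : Prop :=
  (forall x y : 'cV[int]_2, qval Q1 x * qval Q2 y = qval Q3 (B *m zvec x y)) /\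
  unimodular24 B /\ oriented Q1 Q2 B.

Definition B0 (D : int) : 'M[int]_(2, 4) :=
  \matrix_(i < 2, j < 4)
    (if (i == 0 :> nat) then nth 0 [:: 1; 0; 0; D - lam D ^+ 2] j
     else nth 0 [:: 0; 1; 1; 2 * lam D] j).

Definition normm (m n : nat) (M : 'M[int]_(m, n)) : nat :=
  \max_(i < m) \max_(j < n) `|M i j|%N.

Definition logp (x : R) : R := if 4 <= `|x| then ln `|x| / ln 2 else 2.

(* Main.v *)
Require Import Defs.
From HB Require Import structures.
From mathcomp Require Import all_boot all_order all_algebra.
From mathcomp Require Import reals Rstruct exp.
From mathcomp Require Import zify ring lra.
From Stdlib Require Import ClassicalEpsilon.
Import Order.TTheory GRing.Theory Num.Theory.
Local Open Scope ring_scope.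

Lemma lift01 : lift ord0 (ord0 : 'I_1) = 1 :> 'I_2.
Proof. by apply: val_inj. Qed.

Lemma mul2E (A B : 'M[int]_2) i j : (A *m B) i j = A i 0 * B 0 j + A i 1 * B 1 j.
Proof. by rewrite mxE !big_ord_recl big_ord0 addr0 lift01. Qed.
Lemma det2 (A : 'M[int]_2) : \det A = A 0 0 * A 1 1 - A 0 1 * A 1 0.
Proof.
rewrite (expand_det_row _ 0) !big_ord_recl big_ord0 addr0 /cofactor !det_mx11 lift01 !mxE /=.
have -> : lift 0 (0 : 'I_1) = 1 :> 'I_2 by apply: val_inj.
have -> : lift 1 (0 : 'I_1) = 0 :> 'I_2 by apply: val_inj.
rewrite expr0 expr1 !mul1r mulN1r mulrN.  done.
Qed.

Lemma nosq_nat (d a b : nat) : (a * a = d * (b * b))%N -> (0 < b)%N -> exists k, d = (k * k)%N.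
Proof.
move=> h hb.
have : (b ^ 2 %| a ^ 2)%N by rewrite !expnS !expn0 !muln1 h dvdn_mull.
rewrite dvdn_pexp2r // => /dvdnP [k hk].
exists k; move: h; rewrite hk.
have -> : (k * b * (k * b) = (k * k) * (b * b))%N by ring.
move/eqP; rewrite eqn_pmul2r ?muln_gt0 ?hb // => /eqP ->. done.
Qed.

Lemma nosq (D x y : int) : 0 < D -> ~ (exists m : int, D = m * m) -> x * x = D * (y * y) -> y = 0.
Proof.
move=> hD hns h. apply/eqP; apply/negPn/negP => hy.
have h2 : (`|x| * `|x| = `|D| * (`|y| * `|y|))%N.
  by rewrite -!abszM h.
have hy2 : (0 < `|y|)%N by rewrite absz_gt0.
have [k hk] := nosq_nat _ _ _ h2 hy2.
apply: hns; exists k%:Z.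
have -> : D = `|D|%:Z by rewrite gtz0_abs.
by rewrite hk PoszM.
Qed.

Lemma ord2P (P : 'I_2 -> Prop) : P 0 -> P 1 -> forall i, P i.
Proof. move=> h0 h1 [[|[|k]] hk] //.
- by have -> : Ordinal hk = 0 by apply: val_inj.
- by have -> : Ordinal hk = 1 by apply: val_inj.
Qed.

Lemma mx2_ext (A B : 'M[int]_2) : A 0 0 = B 0 0 -> A 0 1 = B 0 1 -> A 1 0 = B 1 0 -> A 1 1 = B 1 1 -> A = B.
Proof.
move=> h00 h01 h10 h11; apply/matrixP; apply: ord2P; apply: ord2P => //.
Qed.

Lemma tr2E (A : 'M[int]_2) i j : A^T i j = A j i.
Proof. by rewrite mxE. Qed.

Lemma fmat00 q : fmat q 0 0 = fa q. Proof. by rewrite !mxE. Qed.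
Lemma fmat01 q : fmat q 0 1 = fb q. Proof. by rewrite !mxE. Qed.
Lemma fmat10 q : fmat q 1 0 = fb q. Proof. by rewrite !mxE. Qed.
Lemma fmat11 q : fmat q 1 1 = fc q. Proof. by rewrite !mxE. Qed.

Lemma fmat_sym q : (fmat q)^T = fmat q.
Proof. apply: mx2_ext; by rewrite !mxE. Qed.

Lemma fmat_form (M : 'M[int]_2) : M^T = M -> fmat (form_of_mat M) = M.
Proof.
move=> hM; apply: mx2_ext; rewrite ?fmat00 ?fmat01 ?fmat10 ?fmat11 //.
by rewrite -{2}hM mxE.
Qed.

Lemma Lmat_S D n : Lmat D (Posz n.+1) = Lmat D (Posz n) *m nbrS D (cycQ D n).
Proof. by rewrite /Lmat big_ord_recr /= mulmxE. Qed.

Lemma Lmat_0 D : Lmat D (Posz 0) = 1.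
Proof. by rewrite /Lmat big_ord0. Qed.

Lemma cycQ_G D n : fmat (cycQ D n) = (Lmat D n)^T *m fmat (Itilde D) *m Lmat D n.
Proof.
elim: n => [|n IH]; first by rewrite Lmat_0 trmx1 mul1mx mulmx1.
rewrite Lmat_S [cycQ _ _.+1]/= /right_nbr fmat_form; last first.
  by rewrite !trmx_mul trmxK fmat_sym mulmxA.
by rewrite IH !trmx_mul !mulmxA.
Qed.

Definition al (t : R) (M : 'M[int]_2) (j : 'I_2) : R := toR (M 0 j) + toR (M 1 j) * t.

Lemma toRE : (forall m n, toR (m + n) = toR m + toR n) /\ (forall m n, toR (m * n) = toR m * toR n)
  /\ (forall m n, toR (m - n) = toR m - toR n) /\ (forall n, toR (- n) = - toR n).
Proof. by rewrite /toR; split; [exact: intrD|split; [exact: intrM|split; [exact: intrB|exact: intrN]]]. Qed.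

Lemma toRD m n : toR (m + n) = toR m + toR n. Proof. exact: intrD. Qed.
Lemma toRM m n : toR (m * n) = toR m * toR n. Proof. exact: intrM. Qed.
Lemma toRB m n : toR (m - n) = toR m - toR n. Proof. exact: intrB. Qed.
Lemma toRN n : toR (- n) = - toR n. Proof. exact: intrN. Qed.
Lemma toR_norm n : toR `|n| = `|toR n|. Proof. exact: intr_norm. Qed.
Lemma toR1 : toR 1 = 1. Proof. by rewrite /toR. Qed.
Lemma toR0 : toR 0 = 0. Proof. by rewrite /toR. Qed.
Lemma toRX n : toR (n ^+ 2) = toR n ^+ 2. Proof. by rewrite /toR rmorphXn. Qed.

Lemma Gentries D (L : 'M[int]_2) :
  let G := L^T *m fmat (Itilde D) *m L in
  G 1 1 = L 0 1 * L 0 1 + 2 * lam D * L 0 1 * L 1 1 + (lam D ^+ 2 - D) * L 1 1 * L 1 1 /\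
  G 0 1 = L 0 0 * L 0 1 + lam D * (L 0 0 * L 1 1 + L 1 0 * L 0 1) + (lam D ^+ 2 - D) * L 1 0 * L 1 1.
Proof.
rewrite /= !mul2E !tr2E !fmat00 !fmat01 !fmat10 !fmat11 /fa /fb /fc /=.
split; ring.
Qed.

Lemma G11_R D (L : 'M[int]_2) s : s ^+ 2 = toR D ->
  toR ((L^T *m fmat (Itilde D) *m L) 1 1) = al (toR (lam D) + s) L 1 * al (toR (lam D) - s) L 1.
Proof.
move=> hs; have [-> _] := Gentries D L.
rewrite /al !(toRD, toRM, toRB, toRX, toRN, toR1) -hs; ring.
Qed.

Lemma G01_R D (L : 'M[int]_2) s : s ^+ 2 = toR D -> \det L = 1 ->
  toR ((L^T *m fmat (Itilde D) *m L) 0 1) = al (toR (lam D) + s) L 0 * al (toR (lam D) - s) L 1 + s.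
Proof.
move=> hs; rewrite det2 => hdet; have [_ ->] := Gentries D L.
have hd : toR (L 0 0 * L 1 1 - L 0 1 * L 1 0) = 1 by rewrite hdet.
rewrite -{3}[s]mulr1 -hd.
rewrite /al !(toRD, toRM, toRB, toRX, toRN, toR1) -hs; ring.
Qed.

Lemma absX (a x y : R) : 0 < a * x -> a * x < `|a * y| -> `|x| < `|y|.
Proof.
move=> h1 h2.
have ha : a != 0 by apply/eqP => ha; move: h1; rewrite ha mul0r ltxx.
have ha' : 0 < `|a| by rewrite normr_gt0.
rewrite -(ltr_pM2l ha') -!normrM (gtr0_norm h1) //.
Qed.

Lemma nbr0 (L : 'M[int]_2) mu i : (L *m nbr_mat mu) i 0 = - L i 1.
Proof. by rewrite mul2E !mxE /=; ring. Qed.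
Lemma nbr1 (L : 'M[int]_2) mu i : (L *m nbr_mat mu) i 1 = L i 0 + L i 1 * mu.
Proof. by rewrite mul2E !mxE /=; ring. Qed.

Lemma det_nbr mu : \det (nbr_mat mu) = 1.
Proof. by rewrite det2 !mxE /=; ring. Qed.

Lemma step D (L : 'M[int]_2) mu q : sqrtD D ^+ 2 = toR D -> \det L = 1 ->
  fmat q = L^T *m fmat (Itilde D) *m L -> mu_spec D q mu ->
  al (toR (lam D) - sqrtD D) (L *m nbr_mat mu) 0 = - al (toR (lam D) - sqrtD D) L 1 /\
  `|al (toR (lam D) - sqrtD D) (L *m nbr_mat mu) 1| < `|al (toR (lam D) - sqrtD D) L 1|.
Proof.
move=> hs hdet hq [h1 h2].
set s := sqrtD D in hs h1 h2 *.
split; first by rewrite /al !nbr0 !toRN; ring.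
have hb : toR (fb q) = al (toR (lam D) + s) L 0 * al (toR (lam D) - s) L 1 + s.
  by rewrite -fmat01 hq (G01_R _ _ _ hs hdet).
have hc : toR (fc q) = al (toR (lam D) + s) L 1 * al (toR (lam D) - s) L 1.
  by rewrite -fmat11 hq (G11_R _ _ _ hs).
have hd : toR (L 0 0 * L 1 1 - L 0 1 * L 1 0) = 1 by rewrite -det2 hdet.
have key : toR (mu * fc q) + toR (fb q) + s =
   al (toR (lam D) + s) L 1 * al (toR (lam D) - s) (L *m nbr_mat mu) 1.
  have hd' : toR (L 0 0) * toR (L 1 1) - toR (L 0 1) * toR (L 1 0) = 1.
    by rewrite -hd !(toRB, toRM).
  rewrite toRM hc hb /al !nbr1 !(toRD, toRM).
  apply/eqP; rewrite -subr_eq0; apply/eqP.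
  transitivity (2 * s - 2 * s * (toR (L 0 0) * toR (L 1 1) - toR (L 0 1) * toR (L 1 0))).
    ring.
  rewrite hd'; ring.
apply: (absX (al (toR (lam D) + s) L 1)).
  by rewrite -key; lra.
rewrite -key -hc; move: h2; rewrite toRM toR_norm; lra.
Qed.

Lemma sqrtD_sq D : 0 < D -> sqrtD D ^+ 2 = toR D.
Proof. move=> hD; rewrite /sqrtD sqr_sqrtr // /toR ler0z; exact: ltW. Qed.

Lemma sqrtD_ge0 D : 0 <= sqrtD D.
Proof. exact: sqrtr_ge0. Qed.

Lemma sqrtD_notint D : 0 < D -> ~ (exists m : int, D = m * m) -> forall m : int, sqrtD D != toR m.
Proof.
move=> hD hns m; apply/eqP => hm; apply: hns; exists m.
apply: (@intr_inj R); rewrite -/(toR D) -(sqrtD_sq _ hD) hm /toR intrM; ring.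
Qed.

Lemma mu_ex D q : 0 < D -> ~ (exists m : int, D = m * m) -> fc q != 0 -> exists mu, mu_spec D q mu.
Proof.
move=> hD hns hc.
set s := sqrtD D; set b := toR (fb q); set c := toR (fc q).
have hc' : c != 0 by rewrite /c /toR intr_eq0.
set t := (- s - b) / c.
have htc : t * c = - s - b by rewrite /t divfK.
have hnt : toR (Num.floor t) != t.
  apply/eqP => he.
  have := sqrtD_notint _ hD hns (- fb q - Num.floor t * fc q).
  rewrite !(toRB, toRM, toRN) he -/b -/c -/s.
  have -> : - b - t * c = s by rewrite htc; ring.
  by rewrite eqxx.
have hfl : toR (Num.floor t) < t by rewrite lt_neqAle hnt floor_le.
have hfu : t < toR (Num.floor t) + 1 by rewrite -toR1 -toRD floorD1_gt.
rewrite /mu_spec -/s -/b.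
have [cpos|cneg] := ltP 0 (fc q).
  exists (Num.floor t + 1).
  have c0 : 0 < c by rewrite /c /toR ltr0z.
  rewrite toR_norm -/c (gtr0_norm c0) toRM toRD toR1 -/c.
  split; nra.
exists (Num.floor t).
have c0 : c < 0.
  rewrite /c /toR ltrz0 lt_neqAle hc /=; exact: cneg.
rewrite toR_norm -/c (ltr0_norm c0) toRM -/c.
split; nra.
Qed.

Lemma lam_le D : toR (lam D) <= sqrtD D.
Proof. exact: floor_le. Qed.
Lemma lam_gt D : sqrtD D < toR (lam D) + 1.
Proof. by rewrite -toR1 -toRD; apply: floorD1_gt. Qed.
Lemma lam_ge0 D : 0 <= toR (lam D).
Proof. by rewrite /toR ler0z /lam floor_ge0; apply: sqrtD_ge0. Qed.

Lemma c_ne0 D (L : 'M[int]_2) : 0 < D -> ~ (exists m : int, D = m * m) -> \det L = 1 ->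
  (L^T *m fmat (Itilde D) *m L) 1 1 != 0.
Proof.
move=> hD hns hdet; have [-> _] := Gentries D L.
apply/eqP => h0.
have h1 : (L 0 1 + lam D * L 1 1) * (L 0 1 + lam D * L 1 1) = D * (L 1 1 * L 1 1).
  by apply/eqP; rewrite -subr_eq0 -h0; apply/eqP; ring.
have hy := nosq _ _ _ hD hns h1.
move: h1; rewrite hy !mulr0 addr0 => /eqP; rewrite mulf_eq0 orbb => /eqP hx.
by move: hdet; rewrite det2 hx hy !mulr0 mul0r subr0 => /eqP; rewrite eq_sym oner_eq0.
Qed.

Lemma mu_of_spec D q : 0 < D -> ~ (exists m : int, D = m * m) -> fc q != 0 -> mu_spec D q (mu_of D q).
Proof.
move=> hD hns hc; rewrite /mu_of; apply: epsilon_spec; exact: mu_ex.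
Qed.

Lemma Linv D (n : nat) : 0 < D -> ~ (exists m : int, D = m * m) ->
  \det (Lmat D n) = 1 /\ `|al (toR (lam D) - sqrtD D) (Lmat D n) 0| <= 1 /\
  `|al (toR (lam D) - sqrtD D) (Lmat D n) 1| <= 1.
Proof.
move=> hD hns; elim: n => [|n [hdet [h0 h1]]].
  rewrite Lmat_0 det1 /al !mxE /= !toR0 !toR1 mul0r addr0 mul1r add0r normr1 lexx.
  have := lam_le D; have := lam_gt D => ? ?.
  split => //; split => //; rewrite ler_norml; apply/andP; split; lra.
have hq := cycQ_G D n.
have hc : fc (cycQ D n) != 0 by rewrite -fmat11 hq; exact: c_ne0.
have hmu := mu_of_spec _ _ hD hns hc.
have [e0 e1] := step _ _ _ _ (sqrtD_sq _ hD) hdet hq hmu.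
rewrite Lmat_S /nbrS det_mulmx hdet det_nbr mul1r; split => //.
rewrite e0 normrN; split => //.
exact: (le_trans (ltW e1)).
Qed.

Lemma normm_attain m n (M : 'M[int]_(m.+1, n.+1)) : exists i j, (normm M)%:Z = `|M i j|.
Proof.
rewrite /normm; have [i hi] := @bigop.eq_bigmax 'I_m.+1 (fun i => \max_(j < n.+1) `|M i j|%N) (ltac:(by rewrite card_ord)).
have [j hj] := @bigop.eq_bigmax 'I_n.+1 (fun j => `|M i j|%N) (ltac:(by rewrite card_ord)).
by exists i, j; rewrite hi hj abszE.
Qed.

Lemma normm_ge m n (M : 'M[int]_(m, n)) i j : `|M i j| <= (normm M)%:Z.
Proof.
rewrite -abszE lez_nat /normm.
apply: (leq_trans _ (leq_bigmax i)).
exact: (leq_trans _ (leq_bigmax j)).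
Qed.

Lemma normm_le_R m n (M : 'M[int]_(m.+1, n.+1)) (X : R) :
  (forall i j, toR `|M i j| <= X) -> toR (normm M) <= X.
Proof. by move=> h; have [i [j ->]] := normm_attain _ _ M. Qed.

Lemma normm_ge_R m n (M : 'M[int]_(m, n)) i j : `|toR (M i j)| <= toR (normm M).
Proof. by rewrite -toR_norm /toR ler_int normm_ge. Qed.
Lemma colA (s l p q : R) : 1 <= s -> 0 <= l -> l <= s -> s < l + 1 -> `|p + q*(l - s)| <= 1 ->
  `|q| <= `|p + q*(l+s)| + 1 /\ `|p| <= `|p + q*(l+s)| + 1.
Proof.
move=> h1 h2 h3 h4 h5.
set A := p + q * (l + s).
have hA : -`|A| <= A <= `|A| by rewrite -ler_norml.
move: hA h5 => /andP [hA1 hA2]; rewrite ler_norml => /andP [h6 h7].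
have hq : - (`|A| + 1) <= 2 * s * q <= `|A| + 1.
  apply/andP; split; rewrite /A in hA1 hA2 *; nra.
move: hq => /andP [hq1 hq2].
split; rewrite ler_norml; apply/andP; split.
- case: (lerP 0 q) => hq0; nra.
- case: (lerP 0 q) => hq0; nra.
- case: (lerP 0 q) => hq0; rewrite /A in hA1 hA2 *; nra.
- case: (lerP 0 q) => hq0; rewrite /A in hA1 hA2 *; nra.
Qed.

Lemma sqrtD_ge1 D : 0 < D -> 1 <= sqrtD D.
Proof.
move=> hD; have h2 := sqrtD_sq _ hD; have h0 := sqrtD_ge0 D.
have : 1 <= toR D by rewrite /toR ler1z.
rewrite -h2; nra.
Qed.

Definition good D (S : 'M[int]_2) := \det S = 1 /\
  `|al (toR (lam D) - sqrtD D) S 0| <= 1 /\ `|al (toR (lam D) - sqrtD D) S 1| <= 1.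

Lemma Sbound D S : 0 < D -> good D S ->
  exists a, 1 <= `|al (toR (lam D) + sqrtD D) S a| /\
            toR (normm S) <= 2 * `|al (toR (lam D) + sqrtD D) S a|.
Proof.
move=> hD [hdet [h0 h1]].
have hs1 := sqrtD_ge1 _ hD; have hl0 := lam_ge0 D; have hl1 := lam_le D; have hl2 := lam_gt D.
set s := sqrtD D in hs1 hl1 hl2 h0 h1 *; set l := toR (lam D) in hl0 hl1 hl2 h0 h1 *.
have hd : toR (S 0 0 * S 1 1 - S 0 1 * S 1 0) = 1 by rewrite -det2 hdet.
have key : al (l + s) S 1 * al (l - s) S 0 - al (l + s) S 0 * al (l - s) S 1 = 2 * s.
  have hd' : toR (S 0 0) * toR (S 1 1) - toR (S 0 1) * toR (S 1 0) = 1.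
    by rewrite -hd !(toRB, toRM).
  transitivity (2 * s * (toR (S 0 0) * toR (S 1 1) - toR (S 0 1) * toR (S 1 0))).
    rewrite /al; ring.
  by rewrite hd' mulr1.
have hsum : 2 * s <= `|al (l + s) S 0| + `|al (l + s) S 1|.
  have e0 := ler_normB (al (l + s) S 1 * al (l - s) S 0) (al (l + s) S 0 * al (l - s) S 1).
  rewrite key (@ger0_norm _ (2 * s)) in e0; last by lra.
  rewrite !normrM in e0.
  have n0 := normr_ge0 (al (l + s) S 0); have n1 := normr_ge0 (al (l + s) S 1).
  nra.
have [c0a c0b] := colA _ _ _ _ hs1 hl0 hl1 hl2 h0.
have [c1a c1b] := colA _ _ _ _ hs1 hl0 hl1 hl2 h1.
have [hc|hc] := lerP `|al (l + s) S 0| `|al (l + s) S 1|.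
  exists 1; split; first by lra.
  apply: normm_le_R; apply: ord2P; apply: ord2P; rewrite toR_norm; lra.
exists 0; split; first by lra.
apply: normm_le_R; apply: ord2P; apply: ord2P; rewrite toR_norm; lra.
Qed.

Lemma inord0_2 : (inord 0 : 'I_2) = 0. Proof. by apply: val_inj; rewrite /= inordK. Qed.
Lemma inord1_2 : (inord 1 : 'I_2) = 1. Proof. by apply: val_inj; rewrite /= inordK. Qed.

Lemma Ment D (S1 S2 : 'M[int]_2) (j : 'I_4) :
  (B0 D *m kron2 S1 S2) 0 j = S1 0 (inord (j %/ 2)) * S2 0 (inord (j %% 2)) +
      (D - lam D ^+ 2) * (S1 1 (inord (j %/ 2)) * S2 1 (inord (j %% 2))) /\
  (B0 D *m kron2 S1 S2) 1 j = S1 0 (inord (j %/ 2)) * S2 1 (inord (j %% 2)) +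
      S1 1 (inord (j %/ 2)) * S2 0 (inord (j %% 2)) +
      2 * lam D * (S1 1 (inord (j %/ 2)) * S2 1 (inord (j %% 2))).
Proof.
rewrite !mxE !big_ord_recl !big_ord0 !mxE /=.
have e1 : (inord (0 %/ 2) : 'I_2) = 0 by apply: val_inj; rewrite /= inordK.
have e2 : (inord (0 %% 2) : 'I_2) = 0 by apply: val_inj; rewrite /= inordK.
have e3 : (inord (bump 0 0 %/ 2) : 'I_2) = 0 by apply: val_inj; rewrite /= inordK.
have e4 : (inord (bump 0 0 %% 2) : 'I_2) = 1 by apply: val_inj; rewrite /= inordK.
have e5 : (inord (bump 0 (bump 0 0) %/ 2) : 'I_2) = 1 by apply: val_inj; rewrite /= inordK.
have e6 : (inord (bump 0 (bump 0 0) %% 2) : 'I_2) = 0 by apply: val_inj; rewrite /= inordK.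
have e7 : (inord (bump 0 (bump 0 (bump 0 0)) %/ 2) : 'I_2) = 1 by apply: val_inj; rewrite /= inordK.
have e8 : (inord (bump 0 (bump 0 (bump 0 0)) %% 2) : 'I_2) = 1 by apply: val_inj; rewrite /= inordK.
rewrite ?e1 ?e2 ?e3 ?e4 ?e5 ?e6 ?e7 ?e8; split; ring.
Qed.

Lemma Mcol D (S1 S2 : 'M[int]_2) (j : 'I_4) : 0 < D ->
  toR ((B0 D *m kron2 S1 S2) 0 j) + toR ((B0 D *m kron2 S1 S2) 1 j) * (toR (lam D) + sqrtD D) =
  al (toR (lam D) + sqrtD D) S1 (inord (j %/ 2)) * al (toR (lam D) + sqrtD D) S2 (inord (j %% 2)).
Proof.
move=> hD; have [-> ->] := Ment D S1 S2 j.
rewrite /al !(toRD, toRM, toRB, toRX, toRN, toR1) -(sqrtD_sq _ hD); ring.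
Qed.

Lemma jpick (a b : 'I_2) : exists j : 'I_4, inord (j %/ 2) = a /\ inord (j %% 2) = b.
Proof.
have hab : (2 * a + b < 4)%N by have := ltn_ord a; have := ltn_ord b; lia.
exists (inord (2 * a + b)); split; apply: val_inj; rewrite /= inordK //; rewrite ?inordK //.
- have := ltn_ord b; lia.
- have := ltn_ord b; lia.
- have := ltn_ord a; have := ltn_ord b; lia.
- have := ltn_ord b; lia.
Qed.

Lemma lower D (S1 S2 : 'M[int]_2) : 0 < D -> good D S1 -> good D S2 ->
  toR (normm S1) * toR (normm S2) <= 4 * (1 + 2 * sqrtD D) * toR (normm (B0 D *m kron2 S1 S2)).
Proof.
move=> hD g1 g2.
have [a [ha1 ha2]] := Sbound _ _ hD g1.
have [b [hb1 hb2]] := Sbound _ _ hD g2.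
have [j [hja hjb]] := jpick a b.
have hM := Mcol D S1 S2 j hD; rewrite hja hjb in hM.
have hl0 := lam_ge0 D; have hl1 := lam_le D; have hs1 := sqrtD_ge1 _ hD.
set s := sqrtD D in hM hl1 hs1 ha1 ha2 hb1 hb2 *.
set l := toR (lam D) in hM hl0 hl1 ha1 ha2 hb1 hb2 *.
set N := toR (normm (B0 D *m kron2 S1 S2)).
have hx := normm_ge_R _ _ (B0 D *m kron2 S1 S2) 0 j.
have hy := normm_ge_R _ _ (B0 D *m kron2 S1 S2) 1 j.
rewrite -/N in hx hy.
set x := toR _ in hx hM; set y := toR _ in hy hM.
have hprod : `|al (l + s) S1 a| * `|al (l + s) S2 b| <= (1 + 2 * s) * N.
  rewrite -normrM -hM.
  apply: (le_trans (ler_normD _ _)); rewrite normrM (@ger0_norm _ (l + s)); last by lra.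
  have := normr_ge0 y; nra.
have n1 := normr_ge0 (al (l + s) S1 a); have n2 := normr_ge0 (al (l + s) S2 b).
have m1 : 0 <= toR (normm S1) by rewrite /toR ler0z.
have m2 : 0 <= toR (normm S2) by rewrite /toR ler0z.
nra.
Qed.

Lemma prod_le (a b A B : R) : `|a| <= A -> `|b| <= B -> `|a * b| <= A * B.
Proof. move=> h1 h2; rewrite normrM; apply: ler_pM => //. Qed.

Lemma Mupper D (S1 S2 : 'M[int]_2) : 0 < D ->
  toR (normm (B0 D *m kron2 S1 S2)) <= (2 + 2 * toR (lam D)) * (toR (normm S1) * toR (normm S2)).
Proof.
move=> hD.
have hl0 := lam_ge0 D; have hl1 := lam_le D; have hl2 := lam_gt D; have hs0 := sqrtD_ge0 D.
have hs := sqrtD_sq _ hD.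
have hE0 : 0 <= toR D - toR (lam D) ^+ 2 by rewrite -hs; nra.
have hE1 : toR D - toR (lam D) ^+ 2 <= 2 * toR (lam D) + 1 by rewrite -hs; nra.
set N1 := toR (normm S1); set N2 := toR (normm S2).
have P : forall i a i' b, `|toR (S1 i a) * toR (S2 i' b)| <= N1 * N2.
  by move=> i a i' b; apply: prod_le; apply: normm_ge_R.
have n0 : 0 <= N1 * N2 by apply: le_trans (P 0 0 0 0); exact: normr_ge0.
apply: normm_le_R => i j; rewrite toR_norm.
have [e0 e1] := Ment D S1 S2 j.
move: i; apply: ord2P.
- rewrite e0 !(toRD, toRM, toRB, toRN, toRX).
  apply: (le_trans (ler_normD _ _)).
  have p1 := P 0 (inord (j %/ 2)) 0 (inord (j %% 2)).
  have p2 := P 1 (inord (j %/ 2)) 1 (inord (j %% 2)).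
  rewrite (normrM (toR D - _)) (ger0_norm hE0).
  have := normr_ge0 (toR (S1 1 (inord (j %/ 2))) * toR (S2 1 (inord (j %% 2)))).
  nra.
- rewrite e1 !(toRD, toRM, toRB, toRN, toRX).
  apply: (le_trans (ler_normD _ _)).
  have p0 := ler_normD (toR (S1 0 (inord (j %/ 2))) * toR (S2 1 (inord (j %% 2))))
             (toR (S1 1 (inord (j %/ 2))) * toR (S2 0 (inord (j %% 2)))).
  have p1 := P 0 (inord (j %/ 2)) 1 (inord (j %% 2)).
  have p2 := P 1 (inord (j %/ 2)) 0 (inord (j %% 2)).
  have p3 := P 1 (inord (j %/ 2)) 1 (inord (j %% 2)).
  rewrite toR1 (normrM ((1 + 1) * toR (lam D))) (@ger0_norm _ ((1 + 1) * toR (lam D))); last by lra.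
  have := normr_ge0 (toR (S1 1 (inord (j %/ 2))) * toR (S2 1 (inord (j %% 2)))).
  nra.
Qed.

Lemma mul2E' n (A : 'M[int]_2) (B : 'M[int]_(2, n)) i j : (A *m B) i j = A i 0 * B 0 j + A i 1 * B 1 j.
Proof. by rewrite mxE !big_ord_recl big_ord0 addr0 lift01. Qed.

Lemma minor_ex (B : 'M[int]_(2, 4)) : unimodular24 B -> exists i k, minor2 B i k != 0.
Proof.
move=> hu; case: (boolP [exists i, exists k, minor2 B i k != 0]).
  by move=> /existsP [i /existsP [k hk]]; exists i, k.
rewrite negb_exists => /forallP hall.
exfalso; move: hu; rewrite /unimodular24.
have -> : \big[gcdz/0]_(i < 4) \big[gcdz/0]_(k < 4 | (i < k)%N) minor2 B i k = 0.
  apply: (big_ind (fun x => x = 0)) => //; first by move=> x y -> ->.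
  move=> i _; apply: (big_ind (fun x => x = 0)) => //; first by move=> x y -> ->.
  move=> k _; have := hall i; rewrite negb_exists => /forallP /(_ k).
  by rewrite negbK => /eqP.
by [].
Qed.

Lemma upper3 (S3 : 'M[int]_2) (B : 'M[int]_(2, 4)) (M : 'M[int]_(2, 4)) :
  S3 *m B = M -> unimodular24 B ->
  toR (normm S3) <= 2 * toR (normm M) * toR (normm B).
Proof.
move=> hM hu; have [i [k hik]] := minor_ex B hu.
set NM := toR (normm M); set NB := toR (normm B).
have hd : 1 <= `|toR (minor2 B i k)|.
  rewrite -toR_norm /toR ler1z; lia.
apply: normm_le_R => r c; rewrite toR_norm.
have hi : M r i = S3 r 0 * B 0 i + S3 r 1 * B 1 i by rewrite -hM mul2E'.
have hk : M r k = S3 r 0 * B 0 k + S3 r 1 * B 1 k by rewrite -hM mul2E'.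
have P : forall (x : 'I_2) (y : 'I_4) (x' : 'I_2) (y' : 'I_4),
    `|toR (M x y) * toR (B x' y')| <= NM * NB.
  by move=> x y x' y'; apply: prod_le; apply: normm_ge_R.
have key : forall c' : 'I_2, exists u v,
   minor2 B i k * S3 r c' = M r u * B v k - M r k * B v u \/
   minor2 B i k * S3 r c' = M r k * B v u - M r u * B v k.
  apply: ord2P.
    exists i, 1; left; rewrite hi hk /minor2; ring.
  exists i, 0; right; rewrite hi hk /minor2; ring.
have [u [v huv]] := key c.
have hc : `|toR (minor2 B i k) * toR (S3 r c)| <= 2 * NM * NB.
  rewrite -toRM.
  have p1 := P r u v k; have p2 := P r k v u.
  case: huv => ->; rewrite toRB !toRM;
  apply: (le_trans (ler_normB _ _)); lra.
move: hc; rewrite normrM; have := normr_ge0 (toR (S3 r c)); nra.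
Qed.

Definition lg (x : R) : R := ln x / ln 2.

Lemma ln2_gt0 : 0 < ln (2 : R).
Proof. by apply: ln_gt0; lra. Qed.

Lemma lgM x y : 0 < x -> 0 < y -> lg (x * y) = lg x + lg y.
Proof. by move=> hx hy; rewrite /lg lnM ?posrE // mulrDl. Qed.

Lemma lg_le x y : 0 < x -> x <= y -> lg x <= lg y.
Proof.
move=> hx hxy; have hy : 0 < y by lra.
rewrite /lg ler_pM2r ?invr_gt0 ?ln2_gt0 // ler_ln ?posrE //.
Qed.

Lemma lg_lt x y : 0 < x -> x < y -> lg x < lg y.
Proof.
move=> hx hxy; have hy : 0 < y by lra.
rewrite /lg ltr_pM2r ?invr_gt0 ?ln2_gt0 // ltr_ln ?posrE //.
Qed.

Lemma lg_pow2 n : lg (2 ^+ n) = n%:R.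
Proof.
rewrite /lg lnXn; last by lra.
rewrite mulrnAl divff //; have := ln2_gt0; lra.
Qed.

Lemma lg_ge0 x : 1 <= x -> 0 <= lg x.
Proof. move=> hx; rewrite /lg divr_ge0 ?ln_ge0 //; have := ln2_gt0; lra. Qed.

Lemma logp_cases x : 1 <= x ->
  (4 <= x /\ logp x = lg x /\ 2 <= lg x) \/ (x < 4 /\ logp x = 2 /\ lg x < 2).
Proof.
move=> hx; rewrite /logp (ger0_norm (_ : 0 <= x)); last by lra.
have e4 : lg 4 = 2 by rewrite (_ : (4 : R) = 2 ^+ 2); [rewrite lg_pow2 | rewrite expr2]; lra.
case: (lerP 4 x) => h.
  left; split => //; split => //; rewrite -e4; apply: lg_le => //; lra.
right; split => //; split => //; rewrite -e4; apply: lg_lt => //; lra.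
Qed.

Definition pc (P L : R) := (P = L /\ 2 <= L) \/ (P = 2 /\ L < 2).
Lemma final_ineq (P1 P2 P3 PB PD L1 L2 L3 LB LD c1 xi : R) :
  P3 = P1 + P2 + xi -> PB <= c1 * PD ->
  L1 + L2 <= 4 + LD + L3 + LB -> L3 <= 4 + LD + L1 + L2 + LB ->
  0 <= L1 -> 0 <= L2 ->
  pc P1 L1 -> pc P2 L2 -> pc P3 L3 -> pc PB LB -> pc PD LD ->
  `|xi| <= (c1 + 4) * PD.
Proof.
move=> hx hB HL HU l1 l2 c1' c2' c3' cb cd.
have hPB : LB <= PB /\ 2 <= PB by case: cb => [[-> ?]|[-> ?]]; lra.
have hPD : LD <= PD /\ 2 <= PD by case: cd => [[-> ?]|[-> ?]]; lra.
have hP3 : L3 <= P3 /\ 2 <= P3 by case: c3' => [[-> ?]|[-> ?]]; lra.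
case: hPB => hb1 hb2; case: hPD => hd1 hd2; case: hP3 => h31 h32.
rewrite mulrDl ler_norml; apply/andP; split.
- case: c1' => [[e1 ?]|[e1 ?]]; case: c2' => [[e2 ?]|[e2 ?]]; case: cd => [[e4 ?]|[e4 ?]]; lra.
- case: c3' => [[e3 ?]|[e3 ?]]; case: c1' => [[e1 ?]|[e1 ?]]; case: c2' => [[e2 ?]|[e2 ?]]; lra.
Qed.

Lemma logp_pc x : 1 <= x -> pc (logp x) (lg x).
Proof. by move=> h; case: (logp_cases x h) => [[_ [-> ?]]|[_ [-> ?]]]; [left|right]. Qed.

Lemma good_L D (k : nat) : 0 < D -> ~ (exists m : int, D = m * m) -> good D (Lmat D k).
Proof. move=> hD hns; exact: Linv. Qed.

Lemma good_N D S : good D S -> good D (- S).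
Proof.
move=> [hd [h0 h1]]; split.
  by rewrite det2 !mxE -hd det2; ring.
by rewrite /al !mxE !toRN !(mulNr, normrN, opprK) -!opprD !normrN.
Qed.

Lemma normm_N m n (S : 'M[int]_(m, n)) : normm (- S) = normm S.
Proof.
by rewrite /normm; apply: eq_bigr => i _; apply: eq_bigr => j _; rewrite mxE abszN.
Qed.

Lemma good_ge1 D S : good D S -> 1 <= toR (normm S).
Proof.
move=> [hd _]; rewrite /toR ler1z.
have h := normm_ge _ _ S.
move: hd; rewrite det2.
have := h 0 0; have := h 0 1; have := h 1 0; have := h 1 1.
case: (normm S) => [|n] /=; last by move=> *; lia.
move=> a b c e.
have -> : S 0 0 = 0 by apply/eqP; rewrite -normr_le0.
by rewrite mul0r sub0r => /eqP; rewrite -mulNr; nia.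
Qed.

Lemma normm_mul (S3 : 'M[int]_2) (B : 'M[int]_(2, 4)) :
  toR (normm (S3 *m B)) <= 2 * toR (normm S3) * toR (normm B).
Proof.
apply: normm_le_R => r j; rewrite toR_norm mul2E' toRD !toRM.
have p1 : `|toR (S3 r 0) * toR (B 0 j)| <= toR (normm S3) * toR (normm B).
  by apply: prod_le; apply: normm_ge_R.
have p2 : `|toR (S3 r 1) * toR (B 1 j)| <= toR (normm S3) * toR (normm B).
  by apply: prod_le; apply: normm_ge_R.
apply: (le_trans (ler_normD _ _)); lra.
Qed.

Lemma D_ge2 D : 0 < D -> ~ (exists m : int, D = m * m) -> 2 <= toR D.
Proof.
move=> hD hns; rewrite -[2]/(toR 2) /toR ler_int.
have : D != 1 by apply/eqP => e; apply: hns; exists 1; rewrite e.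
lia.
Qed.

Theorem lemma6p3 (D : int) (c1 : R) (Q1 Q2 Q3 : bqform) (k1 k2 : nat) (k3 : int)
    (S1 S2 S3 : 'M[int]_2) (B : 'M[int]_(2, 4)) :
  0 < D -> ~ (exists m : int, D = m * m) ->
  in_cycle D Q1 -> in_cycle D Q2 -> in_cycle D Q3 ->
  equiv_via (Itilde D) Q1 S1 -> (S1 = Lmat D k1 \/ S1 = - Lmat D k1) ->
  equiv_via (Itilde D) Q2 S2 -> (S2 = Lmat D k2 \/ S2 = - Lmat D k2) ->
  composes Q1 Q2 Q3 B ->
  logp (toR (normm B)) <= c1 * logp (toR D) ->
  S3 *m B = B0 D *m kron2 S1 S2 ->
  (S3 = Lmat D k3 \/ S3 = - Lmat D k3) ->
  forall xi : R,
    logp (toR (normm (Lmat D k3)))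
      = logp (toR (normm (Lmat D k1))) + logp (toR (normm (Lmat D k2))) + xi ->
  `|xi| <= (c1 + 4) * logp (toR D).
Proof.
move=> hD hns _ _ _ _ hS1 _ hS2 [_ [hu _]] hB hS3B hS3 xi hxi.
have g1 : good D S1 by case: hS1 => ->; [|apply: good_N]; apply: good_L.
have g2 : good D S2 by case: hS2 => ->; [|apply: good_N]; apply: good_L.
have e1 : normm S1 = normm (Lmat D k1) by case: hS1 => -> //; rewrite normm_N.
have e2 : normm S2 = normm (Lmat D k2) by case: hS2 => -> //; rewrite normm_N.
have e3 : normm S3 = normm (Lmat D k3) by case: hS3 => -> //; rewrite normm_N.
rewrite -e1 -e2 -e3 in hxi.
have hlow := lower D S1 S2 hD g1 g2.
have hup := Mupper D S1 S2 hD.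
have h3 := upper3 S3 B _ hS3B hu.
have hm := normm_mul S3 B; rewrite hS3B in hm.
have n1 := good_ge1 _ _ g1; have n2 := good_ge1 _ _ g2.
have hD2 := D_ge2 _ hD hns.
have hs1 := sqrtD_ge1 _ hD; have hs := sqrtD_sq _ hD; have hl1 := lam_le D; have hl0 := lam_ge0 D.
set N1 := toR (normm S1) in hlow hup hxi n1 *.
set N2 := toR (normm S2) in hlow hup hxi n2 *.
set N3 := toR (normm S3) in h3 hm hxi *.
set NB := toR (normm B) in h3 hm hB *.
set NM := toR (normm (B0 D *m kron2 S1 S2)) in hlow hup h3 hm.
set s := sqrtD D in hlow hs1 hs hl1.
set l := toR (lam D) in hup hl1 hl0.
set d := toR D in hs hD2 hB *.
have hsd : 1 + 2 * s <= 2 * d by nra.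
have hld : 1 + l <= 4 * d by nra.
have nm0 : 0 <= NM by apply: le_trans (normr_ge0 _) (normm_ge_R _ _ _ 0 0).
have nb0 : 0 <= NB by rewrite /NB /toR ler0z.
have n30 : 0 <= N3 by rewrite /N3 /toR ler0z.
have e16 : (2:R) ^+ 4 = 16 by rewrite !exprS expr0; lra.
have HL : N1 * N2 <= 2 ^+ 4 * d * (N3 * NB).
  have t1 : 4 * (1 + 2 * s) * NM <= (8 * d) * NM by apply: ler_wpM2r => //; lra.
  rewrite e16; nra.
have HU : N3 <= 2 ^+ 4 * d * (N1 * N2 * NB).
  have t1 : NM * NB <= (2 + 2 * l) * (N1 * N2) * NB by apply: ler_wpM2r.
  have t2 : 0 <= N1 * N2 * NB by apply: mulr_ge0 => //; nra.
  have t3 : (2 + 2 * l) * (N1 * N2 * NB) <= (8 * d) * (N1 * N2 * NB) by apply: ler_wpM2r => //; lra.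
  rewrite e16; nra.
have n3p : 0 < N3 * NB.
  have : 1 <= 2 ^+ 4 * d * (N3 * NB) by have := mulr_ge0 (ltW (lt_le_trans ltr01 n1)) (ltW (lt_le_trans ltr01 n2)); nra.
  rewrite e16 => h; have := mulr_ge0 n30 nb0; nra.
have n3 : 1 <= N3.
  have : 0 < N3 by nra.
  by rewrite /N3 /toR ltr0z ler1z.
have nb : 1 <= NB.
  have : 0 < NB by nra.
  by rewrite /NB /toR ltr0z ler1z.
have p1 : 0 < N1 by lra.
have p2 : 0 < N2 by lra.
have p3 : 0 < N3 by lra.
have pb : 0 < NB by lra.
have pd : 0 < d by lra.
have lg16 : lg 16 = 4 by rewrite -e16 lg_pow2.
have LL : lg N1 + lg N2 <= 4 + lg d + lg N3 + lg NB.
  have := lg_le _ _ (mulr_gt0 p1 p2) HL.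
  rewrite e16 !lgM ?mulr_gt0 // lg16; lra.
have LU : lg N3 <= 4 + lg d + lg N1 + lg N2 + lg NB.
  have := lg_le _ _ p3 HU.
  rewrite e16 !lgM ?mulr_gt0 // lg16; lra.
apply: (final_ineq _ _ _ _ _ _ _ (lg N3) _ _ _ _ hxi hB LL LU (lg_ge0 _ n1) (lg_ge0 _ n2)).
all: apply: logp_pc => //; lra.
Qed.
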